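(* The conditional logics $\mathsf{CEC}$ and $\mathsf{CECN}$ do not have Craig interpolation; consequently they have neither UIP nor ULIP.
   Context: Formulas of $\mathcal{L}_\triangleright$: atoms, $\bot$, $\wedge,\vee,\to$, binary $\triangleright$; $\top:=\bot\to\bot$; $V(\phi)$ is the set of atoms occurring in $\phi$. $\mathsf{CE}$ is the smallest set of formulas containing all instances of classical tautologies and closed under modus ponens and the rule: from $\phi_0\leftrightarrow\phi_1$ and $\psi_0\leftrightarrow\psi_1$ infer $(\phi_0\triangleright\psi_0)\to(\phi_1\triangleright\psi_1)$. $\mathsf{CEC}=\mathsf{CE}$ plus all instances of (CC) $(\phi\triangleright\psi)\wedge(\phi\triangleright\theta)\to(\phi\triangleright\psi\wedge\theta)$; $\mathsf{CECN}=\mathsf{CEC}$ plus (CN) $\phi\triangleright\top$. CIP for a logic $L$: whenever $L\vdash\phi\to\psi$ there is $\theta$ with $V(\theta)\subseteq V(\phi)\cap V(\psi)$, $L\vdash\phi\to\theta$ and $L\vdash\theta\to\psi$. (UIP and ULIP are the uniform and uniform Lyndon interpolation properties, both of which imply CIP.) *)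

(* Defs.v *)
From Stdlib Require Import List.

Inductive form : Type :=
| Atom : nat -> form
| Bot : form
| And : form -> form -> form
| Or : form -> form -> form
| Imp : form -> form -> form
| Cond : form -> form -> form.

Definition Top : form := Imp Bot Bot.
Definition Iff (a b : form) : form := And (Imp a b) (Imp b a).

Fixpoint occurs (p : nat) (f : form) : Prop :=
  match f with
  | Atom q => p = q
  | Bot => False
  | And a b | Or a b | Imp a b | Cond a b => occurs p a \/ occurs p b
  end.

(* Propositional formulas (schemata) used to define classical tautologies *)
Inductive pform : Type :=
| PVar : nat -> pform
| PBot : pform
| PAnd : pform -> pform -> pform
| POr : pform -> pform -> pform
| PImp : pform -> pform -> pform.

Fixpoint peval (v : nat -> bool) (t : pform) : bool :=
  match t with
  | PVar n => v n
  | PBot => false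
  | PAnd a b => andb (peval v a) (peval v b)
  | POr a b => orb (peval v a) (peval v b)
  | PImp a b => orb (negb (peval v a)) (peval v b)
  end.

Definition tautology (t : pform) : Prop := forall v, peval v t = true.

Fixpoint psubst (s : nat -> form) (t : pform) : form :=
  match t with
  | PVar n => s n
  | PBot => Bot
  | PAnd a b => And (psubst s a) (psubst s b)
  | POr a b => Or (psubst s a) (psubst s b)
  | PImp a b => Imp (psubst s a) (psubst s b)
  end.

Inductive derivable (Ax : form -> Prop) : form -> Prop :=
| d_taut : forall (t : pform) (s : nat -> form),
    tautology t -> derivable Ax (psubst s t)
| d_ax : forall f, Ax f -> derivable Ax f
| d_mp : forall f g, derivable Ax (Imp f g) -> derivable Ax f -> derivable Ax g
| d_rce : forall f0 f1 g0 g1,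
    derivable Ax (Iff f0 f1) -> derivable Ax (Iff g0 g1) ->
    derivable Ax (Imp (Cond f0 g0) (Cond f1 g1)).

Definition CC_ax (f : form) : Prop :=
  exists a b c, f = Imp (And (Cond a b) (Cond a c)) (Cond a (And b c)).

Definition CN_ax (f : form) : Prop := exists a, f = Cond a Top.

Definition CE (f : form) : Prop := derivable (fun _ => False) f.
Definition CEC (f : form) : Prop := derivable CC_ax f.
Definition CECN (f : form) : Prop := derivable (fun g => CC_ax g \/ CN_ax g) f.

Definition CIP (L : form -> Prop) : Prop :=
  forall phi psi, L (Imp phi psi) ->
    exists theta,
      (forall p, occurs p theta -> occurs p phi /\ occurs p psi) /\
      L (Imp phi theta) /\ L (Imp theta psi).

(* Main.v *)
Require Import Defs.
From Stdlib Require Import Lia Bool.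

Inductive W := A1 | A2 | B1 | B2.
Definition isB (w : W) : bool := match w with B1 | B2 => true | _ => false end.
Definition isA1 (w : W) : bool := match w with A1 => true | _ => false end.
Definition isB1 (w : W) : bool := match w with B1 => true | _ => false end.

Definition val (n : nat) (w : W) : bool :=
  match n with 0 => isB w | 1 => isA1 w | 2 => isB1 w | _ => false end.

Fixpoint ev (N : (W -> bool) -> bool) (f : form) (w : W) : bool :=
  match f with
  | Atom n => val n w
  | Bot => false
  | And a b => andb (ev N a w) (ev N b w)
  | Or a b => orb (ev N a w) (ev N b w)
  | Imp a b => orb (negb (ev N a w)) (ev N b w)
  | Cond a b => N (ev N b)
  end.

Lemma ev_psubst N s t w : ev N (psubst s t) w = peval (fun n => ev N (s n) w) t.
Proof. induction t; simpl; try rewrite IHt1, IHt2; reflexivity. Qed.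

Definition ext4 (N : (W -> bool) -> bool) :=
  forall f g, f A1 = g A1 -> f A2 = g A2 -> f B1 = g B1 -> f B2 = g B2 -> N f = N g.

Lemma sound (Ax : form -> Prop) N :
  ext4 N ->
  (forall g, Ax g -> forall w, ev N g w = true) ->
  forall f, derivable Ax f -> forall w, ev N f w = true.
Proof.
  intros HN HAx f D. induction D; intros w.
  - rewrite ev_psubst. apply H.
  - apply HAx; auto.
  - specialize (IHD1 w). specialize (IHD2 w). simpl in IHD1.
    rewrite IHD2 in IHD1. exact IHD1.
  - simpl. assert (E : N (ev N g0) = N (ev N g1)).
    { apply HN; match goal with |- ev N g0 ?x = _ =>
        specialize (IHD2 x); simpl in IHD2;
        destruct (ev N g0 x), (ev N g1 x); simpl in *; congruence end. }
    rewrite E. destruct (N (ev N g1)); reflexivity.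
Qed.

Definition N1 (f : W -> bool) := f A1 && negb (f A2) && negb (f B1) && negb (f B2).
Definition N2 (f : W -> bool) := negb (f A1) && negb (f A2) && f B1 && negb (f B2).
Definition full (f : W -> bool) := f A1 && f A2 && f B1 && f B2.
Definition N1' f := N1 f || full f.
Definition N2' f := N2 f || full f.

Ltac ext4tac := intros f g e1 e2 e3 e4; unfold N1', N2', N1, N2, full;
  rewrite e1, e2, e3, e4; reflexivity.
Lemma ext_N1 : ext4 N1. Proof. ext4tac. Qed.
Lemma ext_N2 : ext4 N2. Proof. ext4tac. Qed.
Lemma ext_N1' : ext4 N1'. Proof. ext4tac. Qed.
Lemma ext_N2' : ext4 N2'. Proof. ext4tac. Qed.

Definition CCok (N : (W -> bool) -> bool) := forall f g, N f = true -> N g = true -> N (fun w => f w && g w) = true.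
Ltac cctac := intros f g; unfold N1', N2', N1, N2, full;
  destruct (f A1), (f A2), (f B1), (f B2), (g A1), (g A2), (g B1), (g B2);
  simpl; auto.
Lemma cc_N1 : CCok N1. Proof. cctac. Qed.
Lemma cc_N2 : CCok N2. Proof. cctac. Qed.
Lemma cc_N1' : CCok N1'. Proof. cctac. Qed.
Lemma cc_N2' : CCok N2'. Proof. cctac. Qed.

Lemma ax_CC N : ext4 N -> CCok N -> forall g, CC_ax g -> forall w, ev N g w = true.
Proof.
  intros HE HC g (a & b & c & ->) w. simpl.
  destruct (N (ev N b)) eqn:Eb; destruct (N (ev N c)) eqn:Ec; simpl; auto.
Qed.

Definition rel (N N' : (W -> bool) -> bool) := forall f g, f A1 = f A2 -> f B1 = f B2 -> g A1 = g A2 ->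
  g B1 = g B2 -> f A1 = g A1 -> f B1 = g B1 -> N f = N' g.

Lemma rel12 : rel N1 N2.
Proof. intros f g e1 e2 e3 e4 e5 e6. unfold N1, N2.
  rewrite <- e1, <- e2, <- e3, <- e4, e5, e6.
  destruct (g A1), (g B1); reflexivity. Qed.
Lemma rel12' : rel N1' N2'.
Proof. intros f g e1 e2 e3 e4 e5 e6. unfold N1', N2', N1, N2, full.
  rewrite <- e1, <- e2, <- e3, <- e4, e5, e6.
  destruct (g A1), (g B1); reflexivity. Qed.

Lemma common N N' : rel N N' -> forall th, (forall p, occurs p th -> p = 0) ->
  forall w w', isB w = isB w' -> ev N th w = ev N' th w'.
Proof.
  intros HR th. induction th; intros Hocc w w' Hw; simpl in *;
  try (rewrite (IHth1 (fun p h => Hocc p (or_introl h)) w w' Hw),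
               (IHth2 (fun p h => Hocc p (or_intror h)) w w' Hw); reflexivity).
  - rewrite (Hocc n eq_refl). simpl. exact Hw.
  - reflexivity.
  - assert (H2 := IHth2 (fun p h => Hocc p (or_intror h))).
    apply HR.
    + rewrite (H2 A1 A1 eq_refl), (H2 A2 A1 eq_refl). reflexivity.
    + rewrite (H2 B1 B1 eq_refl), (H2 B2 B1 eq_refl). reflexivity.
    + rewrite <- (H2 A1 A1 eq_refl), (H2 A1 A2 eq_refl). reflexivity.
    + rewrite <- (H2 B1 B1 eq_refl), (H2 B1 B2 eq_refl). reflexivity.
    + apply H2; reflexivity.
    + apply H2; reflexivity.
Qed.

Definition q := Atom 0.
Definition X := And (Imp q Bot) (Atom 1).
Definition Y := And q (Atom 2).
Definition phi := Cond Bot X.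
Definition psi := Imp (Cond Bot Y) (Cond Bot Bot).

Lemma deriv (Ax : form -> Prop) : (forall g, CC_ax g -> Ax g) -> derivable Ax (Imp phi psi).
Proof.
  intros HCC.
  assert (Dcc : derivable Ax (Imp (And (Cond Bot X) (Cond Bot Y)) (Cond Bot (And X Y)))).
  { apply d_ax, HCC. exists Bot, X, Y. reflexivity. }
  assert (Dr : derivable Ax (Imp (Cond Bot (And X Y)) (Cond Bot Bot))).
  { apply d_rce.
    - pose proof (d_taut Ax (PAnd (PImp PBot PBot) (PImp PBot PBot)) Atom) as D.
      apply D. intro v; reflexivity.
    - pose proof (d_taut Ax (PAnd (PImp (PAnd (PAnd (PImp (PVar 0) PBot) (PVar 1))
                                  (PAnd (PVar 0) (PVar 2))) PBot)
                                 (PImp PBot (PAnd (PAnd (PImp (PVar 0) PBot) (PVar 1))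
                                  (PAnd (PVar 0) (PVar 2))))) Atom) as D.
      apply D. intro v; simpl; destruct (v 0), (v 1), (v 2); reflexivity. }
  pose (s := fun n => match n with 0 => Cond Bot X | 1 => Cond Bot Y
                        | 2 => Cond Bot (And X Y) | _ => Cond Bot Bot end).
  pose proof (d_taut Ax (PImp (PImp (PAnd (PVar 0) (PVar 1)) (PVar 2))
     (PImp (PImp (PVar 2) (PVar 3)) (PImp (PVar 0) (PImp (PVar 1) (PVar 3))))) s) as D.
  simpl in D.
  assert (T : tautology (PImp (PImp (PAnd (PVar 0) (PVar 1)) (PVar 2))
     (PImp (PImp (PVar 2) (PVar 3)) (PImp (PVar 0) (PImp (PVar 1) (PVar 3)))))).
  { intro v; simpl; destruct (v 0), (v 1), (v 2), (v 3); reflexivity. }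
  specialize (D T).
  exact (d_mp _ _ _ (d_mp _ _ _ D Dcc) Dr).
Qed.

Lemma noCIP (Ax : form -> Prop) N N' :
  (forall g, CC_ax g -> Ax g) ->
  ext4 N -> ext4 N' -> rel N N' ->
  (forall g, Ax g -> forall w, ev N g w = true) ->
  (forall g, Ax g -> forall w, ev N' g w = true) ->
  ev N phi A1 = true -> ev N' psi A1 = false ->
  ~ CIP (derivable Ax).
Proof.
  intros HCC E E' R S S' Hp Hq H.
  destruct (H phi psi (deriv Ax HCC)) as (th & Hocc & D1 & D2).
  assert (Hc : forall p, occurs p th -> p = 0).
  { intros p hp. destruct (Hocc p hp) as [a b]. simpl in a, b. lia. }
  pose proof (sound Ax N E S _ D1 A1) as T1.
  change (negb (ev N phi A1) || ev N th A1 = true) in T1.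
  rewrite Hp in T1. simpl in T1.
  pose proof (sound Ax N' E' S' _ D2 A1) as T2.
  change (negb (ev N' th A1) || ev N' psi A1 = true) in T2.
  rewrite (common N N' R th Hc A1 A1 eq_refl) in T1.
  rewrite T1, Hq in T2. discriminate.
Qed.

Theorem mainTheorem12 : ~ CIP CEC /\ ~ CIP CECN.
Proof.
  split.
  - apply (noCIP CC_ax N1 N2); auto using ext_N1, ext_N2, rel12.
    + apply ax_CC; auto using ext_N1, cc_N1.
    + apply ax_CC; auto using ext_N2, cc_N2.
  - apply (noCIP _ N1' N2'); auto using ext_N1', ext_N2', rel12'.
    + intros g [h|(a & ->)]; [apply ax_CC; auto using ext_N1', cc_N1' | reflexivity].
    + intros g [h|(a & ->)]; [apply ax_CC; auto using ext_N2', cc_N2' | reflexivity].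
Qed.
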